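(* Let $k\geq2$ be an integer. The function $\psi_k(x)$ is strictly decreasing on $x>k$.
   Context: $f_t(\lambda)=e^{-\lambda}\sum_{i\geq t}\lambda^i/i!$. For $x>k$, let $\lambda=\lambda(x)>0$ be the unique positive root of $\lambda f_{k-1}(\lambda)=xf_k(\lambda)$, and define $\psi_k(x)=\frac{e^{-\lambda}\lambda^{k-1}}{f_{k-1}(\lambda)\,(k-1)!}$. *)

(* Defs.v *)
From Stdlib Require Import Reals ClassicalEpsilon.
From Coquelicot Require Import Coquelicot.
Open Scope R_scope.

(* f_t(l) = e^{-l} * sum_{i >= t} l^i / i!  (Poisson upper tail) *)
Definition f (t : nat) (l : R) : R :=
  exp (- l) * Series (fun i : nat => if Nat.leb t i then l ^ i / INR (Factorial.fact i) else 0).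

Definition is_lambda (k : nat) (x l : R) : Prop :=
  0 < l /\ l * f (k - 1) l = x * f k l.

(* lambda_k(x): "the" positive root (chosen by Hilbert's epsilon; the paper
   asserts it is unique for x > k). *)
Definition lambda (k : nat) (x : R) : R :=
  epsilon (inhabits 0) (is_lambda k x).

Definition psi (k : nat) (x : R) : R :=
  let l := lambda k x in
  exp (- l) * l ^ (k - 1) / (f (k - 1) l * INR (Factorial.fact (k - 1))).

(* Main.v *)
Require Import Defs.
From Stdlib Require Import Reals Lra Lia ClassicalEpsilon.
From Coquelicot Require Import Coquelicot.
Open Scope R_scope.

Definition a (k n : nat) : R := / INR (Factorial.fact (k + n)).
Definition T (k : nat) (l : R) : R := PSeries (a k) l.

Lemma fact_pos' n : 0 < INR (Factorial.fact n).
Proof. apply lt_0_INR, Factorial.lt_O_fact. Qed.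

Lemma a_ratio k n : a k (S n) / a k n = / INR (n + S k).
Proof.
  unfold a. replace (k + S n)%nat with (S (k + n)) by lia.
  replace (n + S k)%nat with (S (k + n)) by lia.
  change (Factorial.fact (S (k+n))) with (S (k+n) * Factorial.fact (k+n))%nat; rewrite mult_INR.
  assert (H1 := fact_pos' (k+n)). assert (H2 : 0 < INR (S (k+n))) by (apply lt_0_INR; lia).
  field. lra.
Qed.

Lemma CV_a k : CV_radius (a k) = p_infty.
Proof.
  apply CV_radius_infinite_DAlembert.
  - intro n; unfold a; apply Rinv_neq_0_compat; apply Rgt_not_eq, fact_pos'.
  - apply is_lim_seq_ext with (fun n => / INR (n + S k)).
    + intro n. rewrite a_ratio. rewrite Rabs_pos_eq; auto.
      apply Rlt_le, Rinv_0_lt_compat, lt_0_INR; lia.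
    + replace (Finite 0) with (Rbar_inv p_infty) by reflexivity.
      apply is_lim_seq_inv; [|discriminate].
      apply (is_lim_seq_incr_n INR (S k)). apply is_lim_seq_INR.
Qed.

Lemma inrad k l : Rbar_lt (Rabs l) (CV_radius (a k)).
Proof. rewrite CV_a. exact I. Qed.

Lemma ex_T k l : ex_series (fun n => a k n * l ^ n).
Proof. apply ex_pseries_R. apply CV_radius_inside. apply inrad. Qed.

Lemma tail_eq t l : (0 < t)%nat ->
  Series (fun i : nat => if Nat.leb t i then l ^ i / INR (Factorial.fact i) else 0)
  = l ^ t * T t l.
Proof.
  intro Ht. set (u := fun i : nat => _).
  assert (Hs : forall n, u (t + n)%nat = l ^ t * (a t n * l ^ n)).
  { intro n. unfold u. replace (Nat.leb t (t+n)) with true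
      by (symmetry; apply Nat.leb_le; lia).
    unfold a. rewrite pow_add. unfold Rdiv. ring. }
  assert (Hex : ex_series u).
  { apply (ex_series_incr_n u t).
    apply ex_series_ext with (fun n => scal (l ^ t) (a t n * l ^ n)).
    - intro n. rewrite Hs. reflexivity.
    - apply (@ex_series_scal_l R_AbsRing R_NormedModule). apply ex_T. }
  rewrite (Series_incr_n u t Ht Hex).
  rewrite sum_eq_R0.
  - rewrite Rplus_0_l. rewrite (Series_ext _ (fun n => l ^ t * (a t n * l ^ n))) by exact Hs.
    rewrite Series_scal_l. reflexivity.
  - intros n Hn. unfold u. replace (Nat.leb t n) with false; auto.
    symmetry; apply Nat.leb_gt; lia.
Qed.

Lemma f_eq t l : (0 < t)%nat -> Defs.f t l = exp (- l) * (l ^ t * T t l).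
Proof. intro Ht. unfold Defs.f. rewrite tail_eq; auto. Qed.

Lemma T_decr m l : T m l = / INR (Factorial.fact m) + l * T (S m) l.
Proof.
  unfold T. rewrite PSeries_decr_1.
  - unfold a at 1. rewrite Nat.add_0_r. f_equal. f_equal.
    apply PSeries_ext. intro n. unfold PS_decr_1, a. f_equal. f_equal. f_equal. lia.
  - apply CV_radius_inside, inrad.
Qed.

Lemma Series_ge0 (u : nat -> R) : (forall n, 0 <= u n) -> ex_series u -> 0 <= Series u.
Proof.
  intros H Hex. replace 0 with (Series (fun n => 0 * u n))
    by (rewrite Series_scal_l; ring).
  apply Series_le; auto. intro n; rewrite Rmult_0_l; split; [lra|auto].
Qed.

Lemma a_pos k n : 0 < a k n.
Proof. unfold a. apply Rinv_0_lt_compat, fact_pos'. Qed.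

Lemma T_mono k l1 l2 : 0 <= l1 <= l2 -> T k l1 <= T k l2.
Proof.
  intros H. unfold T, PSeries. apply Series_le; [|apply ex_T].
  intro n. split.
  - apply Rmult_le_pos; [apply Rlt_le, a_pos|apply pow_le; lra].
  - apply Rmult_le_compat_l; [apply Rlt_le, a_pos|apply pow_incr; lra].
Qed.

Lemma T_ge k l : 0 <= l -> a k 0 <= T k l.
Proof. intro. unfold T. rewrite <- PSeries_0. fold (T k 0). apply T_mono. lra. Qed.

Lemma fact_ineq k' p : forall m', (k' <= m')%nat ->
  (Factorial.fact (S k' + p) * Factorial.fact m' <= Factorial.fact k' * Factorial.fact (m' + p + 1))%nat.
Proof.
  induction p as [|p IH]; intros m' Hm.
  - rewrite Nat.add_0_r, Nat.add_0_r, Nat.add_1_r.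
    change (Factorial.fact (S k')) with (S k' * Factorial.fact k')%nat.
    change (Factorial.fact (S m')) with (S m' * Factorial.fact m')%nat.
    assert (Factorial.fact k' * Factorial.fact m' * S k' <= Factorial.fact k' * Factorial.fact m' * S m')%nat
      by (apply Nat.mul_le_mono_l; lia).
    nia.
  - replace (S k' + S p)%nat with (S (S k' + p)) by lia.
    replace (m' + S p + 1)%nat with (S (m' + p + 1)) by lia.
    change (Factorial.fact (S (S k' + p))) with (S (S k' + p) * Factorial.fact (S k' + p))%nat.
    change (Factorial.fact (S (m' + p + 1))) with (S (m' + p + 1) * Factorial.fact (m' + p + 1))%nat.
    specialize (IH m' Hm).
    assert (S (S k' + p) <= S (m' + p + 1))%nat by lia.
    assert (H2 := Nat.mul_le_mono _ _ _ _ H IH). nia.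
Qed.

Lemma coef_ineq k' n j : (j <= n)%nat ->
  a (S k') (S n) <= INR (Factorial.fact k') * (a (S k') j * a (S k') (n - j)).
Proof.
  intro Hj. unfold a.
  assert (H := fact_ineq k' j (S k' + (n - j)) ltac:(lia)).
  replace (S k' + (n - j) + j + 1)%nat with (S k' + S n)%nat in H by lia.
  apply le_INR in H. rewrite !mult_INR in H.
  assert (P1 := fact_pos' (S k' + j)). assert (P2 := fact_pos' (S k' + (n-j))).
  assert (P3 := fact_pos' (S k' + S n)). assert (P4 := fact_pos' k').
  set (A := INR (Factorial.fact (S k' + j))) in *.
  set (B := INR (Factorial.fact (S k' + (n-j)))) in *.
  set (C := INR (Factorial.fact (S k' + S n))) in *.
  set (c := INR (Factorial.fact k')) in *.
  replace (c * (/ A * / B)) with (/ (A * B / c)) by (field; lra).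
  apply Rinv_le_contravar.
  - apply Rdiv_lt_0_compat; [nra|lra].
  - apply (Rmult_le_reg_r c); [lra|]. unfold Rdiv. rewrite Rmult_assoc, Rinv_l by lra. lra.
Qed.

Lemma sum_lb (u : nat -> R) b m : (forall j, (j <= m)%nat -> b <= u j) -> INR (S m) * b <= sum_f_R0 u m.
Proof.
  induction m as [|m IH]; intro H.
  - simpl. specialize (H 0%nat (Nat.le_refl 0)). lra.
  - rewrite S_INR. simpl sum_f_R0. assert (b <= u (S m)) by (apply H; lia).
    assert (INR (S m) * b <= sum_f_R0 u m) by (apply IH; intros; apply H; lia). lra.
Qed.

Lemma key_ineq k' l : 0 <= l ->
  PSeries (PS_derive (a (S k'))) l < INR (Factorial.fact k') * (T (S k') l * T (S k') l).
Proof.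
  intro Hl. set (k := S k'). set (c := INR (Factorial.fact k')).
  unfold T. rewrite <- PSeries_mult by apply inrad. unfold PSeries.
  assert (E1 : ex_series (fun n => PS_mult (a k) (a k) n * l ^ n)).
  { apply ex_pseries_R, ex_pseries_mult; apply inrad. }
  assert (E2 : ex_series (fun n => PS_derive (a k) n * l ^ n)).
  { apply ex_pseries_R, ex_pseries_derive; apply inrad. }
  rewrite (Series_incr_1 _ E1), (Series_incr_1 _ E2).
  assert (E3 : ex_series (fun n => c * (PS_mult (a k) (a k) (S n) * l ^ (S n)))).
  { apply (@ex_series_scal_l R_AbsRing R_NormedModule).
    apply (ex_series_incr_1 (fun n => PS_mult (a k) (a k) n * l ^ n)). exact E1. }
  assert (L : Series (fun n => PS_derive (a k) (S n) * l ^ (S n))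
              <= Series (fun n => c * (PS_mult (a k) (a k) (S n) * l ^ (S n)))).
  { apply Series_le; auto. intro n. unfold PS_derive. split.
    - apply Rmult_le_pos; [apply Rmult_le_pos; [apply pos_INR|apply Rlt_le, a_pos]|apply pow_le; auto].
    - rewrite <- Rmult_assoc. apply Rmult_le_compat_r; [apply pow_le; auto|].
      unfold PS_mult. rewrite scal_sum. apply sum_lb. intros j Hj.
      rewrite Rmult_comm. apply coef_ineq. auto. }
  rewrite Series_scal_l in L.
  assert (L0 : PS_derive (a k) 0 * l ^ 0 < c * (PS_mult (a k) (a k) 0 * l ^ 0)).
  { unfold PS_derive, PS_mult. simpl. unfold a, k. rewrite !Nat.add_0_r.
    replace (S k' + 1)%nat with (S (S k')) by lia.
    change (Factorial.fact (S (S k'))) with (S (S k') * (S k' * Factorial.fact k'))%nat.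
    change (Factorial.fact (S k')) with (S k' * Factorial.fact k')%nat.
    rewrite !mult_INR. fold c. rewrite !S_INR.
    assert (P := fact_pos' k'). fold c in P. assert (Q := pos_INR k').
    set (K := INR k') in *.
    apply Rminus_gt_0_lt. field_simplify; [|repeat split; lra].
    apply Rdiv_lt_0_compat; [lra|]. assert (0 < K^3 + 4*K^2+5*K+2) by (simpl; nra). nra. }
  nra.
Qed.

Section Main.
Variable k' : nat.
Hypothesis hk' : (1 <= k')%nat.
Let c := INR (Factorial.fact k').
Let V := T (S k').
Let g l := l + / (c * V l).

Lemma c_pos : 0 < c.
Proof. apply fact_pos'. Qed.

Lemma V_lb l : 0 <= l -> / INR (S k') <= c * V l.
Proof.
  intro Hl. assert (H := T_ge (S k') l Hl). fold V in H. unfold a in H.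
  rewrite Nat.add_0_r in H.
  change (Factorial.fact (S k')) with (S k' * Factorial.fact k')%nat in H.
  rewrite mult_INR in H. fold c in H.
  assert (P := c_pos). assert (Q : 0 < INR (S k')) by (apply lt_0_INR; lia).
  replace (/ INR (S k')) with (c * / (INR (S k') * c)) by (field; lra).
  apply Rmult_le_compat_l; lra.
Qed.

Lemma V_pos l : 0 <= l -> 0 < V l.
Proof.
  intro Hl. assert (H := V_lb l Hl). assert (P := c_pos).
  assert (Q : 0 < / INR (S k')) by (apply Rinv_0_lt_compat, lt_0_INR; lia). nra.
Qed.

Lemma g_deriv l : 0 < l ->
  is_derive g l (1 + - (c * PSeries (PS_derive (a (S k'))) l) / (c * V l) ^ 2).
Proof.
  intro Hl. unfold g. apply (is_derive_plus (fun y => y) (fun y => / (c * V y))).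
  - apply (@is_derive_id R_AbsRing).
  - apply (is_derive_inv (fun y => c * V y)).
    + apply (is_derive_scal (fun y => V y)). apply is_derive_PSeries. apply inrad.
    + assert (P := c_pos). assert (Q := V_pos l (Rlt_le _ _ Hl)). nra.
Qed.

Lemma g_incr l1 l2 : 0 < l1 -> l1 < l2 -> g l1 < g l2.
Proof.
  intros H1 H2.
  apply (incr_function g (Finite 0) p_infty
    (fun l => 1 + - (c * PSeries (PS_derive (a (S k'))) l) / (c * V l) ^ 2)); simpl; auto; try lra.
  - intros x Hx _. apply g_deriv; auto.
  - intros x Hx _. assert (K := key_ineq k' x (Rlt_le _ _ Hx)). fold c V in K.
    assert (P := c_pos). assert (Q := V_pos x (Rlt_le _ _ Hx)).
    assert (R2 : 0 < (c * V x) ^ 2) by (apply pow_lt; apply Rmult_lt_0_compat; auto).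
    assert (H0 : c * PSeries (PS_derive (a (S k'))) x < (c * V x) ^ 2).
    { apply Rlt_le_trans with (c * (c * (V x * V x))). apply Rmult_lt_compat_l; auto. right; ring. }
    assert (D : (c * PSeries (PS_derive (a (S k'))) x) / ((c * V x) ^ 2) < 1).
    { apply (Rmult_lt_reg_r ((c * V x) ^ 2)); auto. unfold Rdiv.
      rewrite Rmult_assoc, Rinv_l by lra. lra. }
    simpl in D. unfold Rdiv in *. rewrite Ropp_mult_distr_l_reverse. lra.
Qed.

Lemma g_cont l : 0 < l -> continuity_pt g l.
Proof.
  intro Hl. apply continuity_pt_filterlim.
  apply (ex_derive_continuous g). eexists. apply g_deriv; auto.
Qed.

Lemma lambda_iff x l : 0 < l -> (is_lambda (S k') x l <-> g l = x).
Proof.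
  intro Hl. unfold is_lambda.
  replace (S k' - 1)%nat with k' by lia.
  rewrite f_eq by lia. rewrite f_eq by lia.
  rewrite T_decr. fold V. unfold g.
  assert (P := c_pos). assert (Q := V_pos l (Rlt_le _ _ Hl)).
  assert (E := exp_pos (- l)). assert (Lp : 0 < l ^ k') by (apply pow_lt; lra).
  unfold c in *. set (cc := INR (Factorial.fact k')) in *.
  split.
  - intros [_ H]. simpl in H.
    assert (H' : exp (- l) * (l * l ^ k') * (/ cc + l * V l - x * V l) = 0) by lra.
    apply Rmult_integral in H'. destruct H' as [H'|H'].
    + exfalso. assert (0 < exp (- l) * (l * l ^ k')) by (apply Rmult_lt_0_compat; nra). lra.
    + apply (Rmult_eq_reg_r (V l)); [|lra].
      assert (H0 : / cc + l * V l = x * V l) by lra. rewrite <- H0. field. lra.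
  - intro H. split; auto. simpl. rewrite <- H. field. lra.
Qed.

Lemma lambda_exists x : INR (S k') < x -> exists l, is_lambda (S k') x l.
Proof.
  intro Hx. set (l0 := (x - INR (S k')) / 2).
  assert (Kp : 0 < INR (S k')) by (apply lt_0_INR; lia).
  assert (Hl0 : 0 < l0) by (unfold l0; lra).
  assert (G0 : g l0 - x < 0).
  { unfold g. assert (H := V_lb l0 (Rlt_le _ _ Hl0)).
    assert (/ (c * V l0) <= INR (S k')).
    { rewrite <- (Rinv_inv (INR (S k'))). apply Rinv_le_contravar; auto.
      apply Rinv_0_lt_compat; auto. }
    unfold l0 in *. lra. }
  assert (G1 : 0 < g x - x).
  { unfold g. assert (0 < / (c * V x)).
    { apply Rinv_0_lt_compat. apply Rmult_lt_0_compat; [apply c_pos|apply V_pos; lra]. }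
    lra. }
  destruct (Ranalysis5.IVT_interv (fun l => g l - x) l0 x) as [z [Hz Hgz]]; auto.
  - intros b Hb. apply continuity_pt_minus; [apply g_cont; lra|apply continuity_pt_const; intros ? ?; reflexivity].
  - unfold l0; lra.
  - exists z. apply lambda_iff; lra.
Qed.

Lemma psi_eq x : INR (S k') < x ->
  psi (S k') x = / (c * T k' (lambda (S k') x)) /\ is_lambda (S k') x (lambda (S k') x).
Proof.
  intro Hx. assert (HL : is_lambda (S k') x (lambda (S k') x)).
  { unfold lambda. apply epsilon_spec. apply lambda_exists; auto. }
  split; auto. destruct HL as [Hl _].
  unfold psi. set (l := lambda (S k') x) in *.
  replace (S k' - 1)%nat with k' by lia. rewrite f_eq by lia.
  assert (P := c_pos). assert (E := exp_pos (- l)). assert (Lp : 0 < l ^ k') by (apply pow_lt; lra).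
  assert (U : 0 < T k' l).
  { rewrite T_decr. assert (Q := V_pos l (Rlt_le _ _ Hl)). fold V.
    apply Rplus_lt_0_compat. apply Rinv_0_lt_compat; apply c_pos. apply Rmult_lt_0_compat; auto. }
  fold c. field. repeat split; lra.
Qed.

End Main.

Theorem lemma51 (k : nat) (hk : (2 <= k)%nat) :
  forall x y : R, INR k < x -> x < y -> psi k y < psi k x.
Proof.
  intros x y Hx Hxy.
  destruct k as [|k']; [lia|]. assert (hk' : (1 <= k')%nat) by lia.
  destruct (psi_eq k' hk' x Hx) as [Px Lx].
  destruct (psi_eq k' hk' y ltac:(lra)) as [Py Ly].
  rewrite Px, Py.
  set (lx := lambda (S k') x) in *. set (ly := lambda (S k') y) in *.
  assert (Hlx : 0 < lx) by (destruct Lx; auto).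
  assert (Hly : 0 < ly) by (destruct Ly; auto).
  apply (lambda_iff k' hk' x lx Hlx) in Lx.
  apply (lambda_iff k' hk' y ly Hly) in Ly.
  assert (Hlt : lx < ly).
  { destruct (Rlt_or_le lx ly) as [H|H]; auto. exfalso.
    destruct (Req_dec lx ly) as [E|E].
    - rewrite E in Lx. lra.
    - assert (ly < lx) by lra. assert (G := g_incr k' hk' ly lx Hly H0). lra. }
  assert (P := c_pos k').
  assert (Vx := V_pos k' hk' lx (Rlt_le _ _ Hlx)). assert (Vy := V_pos k' hk' ly (Rlt_le _ _ Hly)).
  assert (Mono : lx * T (S k') lx < ly * T (S k') ly).
  { assert (T (S k') lx <= T (S k') ly) by (apply T_mono; lra).
    apply Rlt_le_trans with (ly * T (S k') lx).
    - apply Rmult_lt_compat_r; auto.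
    - apply Rmult_le_compat_l; lra. }
  rewrite (T_decr k' lx), (T_decr k' ly).
  assert (0 < / INR (Factorial.fact k')) by (apply Rinv_0_lt_compat, fact_pos').
  apply Rinv_lt_contravar.
  - assert (0 < lx * T (S k') lx) by (apply Rmult_lt_0_compat; auto).
    apply Rmult_lt_0_compat; apply Rmult_lt_0_compat; auto; lra.
  - apply Rmult_lt_compat_l; [apply fact_pos'|lra].
Qed.
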